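(* Let $H$ be a hyperring and $\mathrm{Mod}_H$ the category of $H$-modules. Let $\mathfrak{M}$ be the class of strict injective morphisms and $\mathfrak{E}$ the class of strict surjective morphisms in $\mathrm{Mod}_H$. Then $(\mathrm{Mod}_H,\mathfrak{M},\mathfrak{E})$ is a proto-exact category.
   Context: A hyperaddition on a set $M$ is a map $M\times M\to\mathcal{P}^*(M)$ (nonempty subsets), $(a,b)\mapsto a+b$, with $a+b=b+a$; for subsets, $A+B=\bigcup_{a\in A,b\in B}(a+b)$, and elements are identified with singletons. A hypergroup is a set with a hyperaddition such that $(a+b)+c=a+(b+c)$; there is a unique $0$ with $a+0=\{a\}$; each $a$ has a unique $-a$ with $0\in a+(-a)$; and $a\in b+c$ implies $c\in a+(-b)$. A hyperring is a hypergroup $H$ with a commutative monoid multiplication $(H,\cdot,1)$ such that $a(b+c)=ab+ac$ (and $0a=0$). An $H$-module is a hypergroup $M$ with a map $H\times M\to M$ such that $1m=m$, $0m=0$, $(xy)m=x(ym)$, $x(m_1+m_2)=xm_1+xm_2$, $(x+y)m=xm+ym$. A morphism of $H$-modules is a map $f$ with $f(0)=0$, $f(rm)=rf(m)$ and $f(a+b)\subseteq f(a)+f(b)$; it is strict if $f(a+b)=f(a)+f(b)$ for all $a,b$. A proto-exact category is a pointed category $\mathcal{C}$ with two classes of morphisms $\mathfrak{M}$ (admissible monomorphisms) and $\mathfrak{E}$ (admissible epimorphisms) such that: (1) for every object $A$, $0\to A$ lies in $\mathfrak{M}$ and $A\to 0$ lies in $\mathfrak{E}$; (2) $\mathfrak{M}$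 and $\mathfrak{E}$ contain all isomorphisms and are closed under composition; (3) a commutative square with top $i:A\to B$, bottom $i':A'\to B'$ in $\mathfrak{M}$ and left $j:A\to A'$, right $j':B\to B'$ in $\mathfrak{E}$ is a pullback if and only if it is a pushout; (4) every pair $i':A'\to B'$ in $\mathfrak{M}$, $j':B\to B'$ in $\mathfrak{E}$ can be completed to such a square which is both a pullback and a pushout, with $i\in\mathfrak{M}$, $j\in\mathfrak{E}$; (5) every pair $i:A\to B$ in $\mathfrak{M}$, $j:A\to A'$ in $\mathfrak{E}$ can be completed to such a square which is both a pullback and a pushout, with $i'\in\mathfrak{M}$, $j'\in\mathfrak{E}$. *)

(* Defs.v *)
From Stdlib Require Import Classical FunctionalExtensionality.

(* Subsets are predicates.  [hg_add a b c] means  c \in a + b. *)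
Record hypergroup : Type := HyperGroup {
  hg_car :> Type;
  hg_add : hg_car -> hg_car -> hg_car -> Prop;
  hg_zero : hg_car;
  hg_opp : hg_car -> hg_car;
  hg_add_nonempty : forall a b, exists c, hg_add a b c;
  hg_addC : forall a b c, hg_add a b c <-> hg_add b a c;
  (* (a + b) + c = a + (b + c) *)
  hg_addA : forall a b c x,
    (exists y, hg_add a b y /\ hg_add y c x) <->
    (exists y, hg_add b c y /\ hg_add a y x);
  hg_add0 : forall a x, hg_add a hg_zero x <-> x = a;
  hg_zero_unique : forall z, (forall a x, hg_add a z x <-> x = a) -> z = hg_zero;
  hg_addN : forall a, hg_add a (hg_opp a) hg_zero;
  hg_opp_unique : forall a b, hg_add a b hg_zero -> b = hg_opp a;
  hg_reversible : forall a b c, hg_add b c a -> hg_add a (hg_opp b) c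
}.

Arguments hg_add {h} _ _ _.
Arguments hg_zero {h}.
Arguments hg_opp {h} _.

Record hyperring : Type := HyperRing {
  hr_hg :> hypergroup;
  hr_mul : hr_hg -> hr_hg -> hr_hg;
  hr_one : hr_hg;
  hr_mulA : forall a b c, hr_mul a (hr_mul b c) = hr_mul (hr_mul a b) c;
  hr_mulC : forall a b, hr_mul a b = hr_mul b a;
  hr_mul1 : forall a, hr_mul hr_one a = a;
  (* a (b + c) = ab + ac *)
  hr_mulDr : forall a b c x,
    hg_add (hr_mul a b) (hr_mul a c) x <-> exists y, hg_add b c y /\ x = hr_mul a y;
  hr_mul0 : forall a, hr_mul hg_zero a = hg_zero
}.

Arguments hr_mul {h} _ _.
Arguments hr_one {h}.

Record hmodule (H : hyperring) : Type := HModule {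
  hm_hg :> hypergroup;
  hm_act : H -> hm_hg -> hm_hg;
  hm_act1 : forall m, hm_act hr_one m = m;
  hm_act0 : forall m, hm_act hg_zero m = hg_zero;
  hm_actA : forall x y m, hm_act (hr_mul x y) m = hm_act x (hm_act y m);
  (* x (m1 + m2) = x m1 + x m2 *)
  hm_actDr : forall x m1 m2 z,
    hg_add (hm_act x m1) (hm_act x m2) z <-> exists y, hg_add m1 m2 y /\ z = hm_act x y;
  (* (x + y) m = x m + y m *)
  hm_actDl : forall x y m z,
    hg_add (hm_act x m) (hm_act y m) z <-> exists r, hg_add x y r /\ z = hm_act r m
}.

Arguments hm_act {H h} _ _.

Record hmod_hom {H : hyperring} (M N : hmodule H) : Type := HModHom {
  hom_fun :> M -> N;
  hom_zero : hom_fun hg_zero = hg_zero;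
  hom_act : forall r m, hom_fun (hm_act r m) = hm_act r (hom_fun m);
  hom_add : forall a b c, hg_add a b c -> hg_add (hom_fun a) (hom_fun b) (hom_fun c)
}.

Arguments hom_fun {H M N} _ _.

Definition hom_comp {H : hyperring} {A B C : hmodule H}
  (g : hmod_hom B C) (f : hmod_hom A B) : hmod_hom A C.
Proof.
  refine (@HModHom H A C (fun x => g (f x)) _ _ _).
  - rewrite (hom_zero _ _ f). apply hom_zero.
  - intros r m. rewrite (hom_act _ _ f). apply hom_act.
  - intros a b c Habc. apply hom_add, hom_add, Habc.
Defined.

(* Strict morphisms: f(a+b) = f(a)+f(b). *)
Definition strict {H : hyperring} {M N : hmodule H} (f : hmod_hom M N) : Prop :=
  forall a b z, hg_add (f a) (f b) z <-> exists c, hg_add a b c /\ z = f c.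

Definition injective_hom {H : hyperring} {M N : hmodule H} (f : hmod_hom M N) : Prop :=
  forall x y, f x = f y -> x = y.

Definition surjective_hom {H : hyperring} {M N : hmodule H} (f : hmod_hom M N) : Prop :=
  forall y, exists x, f x = y.

Definition strict_mono {H : hyperring} {M N : hmodule H} (f : hmod_hom M N) : Prop :=
  strict f /\ injective_hom f.

Definition strict_epi {H : hyperring} {M N : hmodule H} (f : hmod_hom M N) : Prop :=
  strict f /\ surjective_hom f.

(* ---- Categorical notions in Mod_H.  Morphisms are equal iff their underlying
   functions are (pointwise) equal; we state equalities of morphisms pointwise. *)

Definition hom_eq {H : hyperring} {M N : hmodule H} (f g : hmod_hom M N) : Prop :=
  forall x, f x = g x.

Definition is_iso {H : hyperring} {M N : hmodule H} (f : hmod_hom M N) : Prop :=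
  exists g : hmod_hom N M, (forall x, g (f x) = x) /\ (forall y, f (g y) = y).

Definition is_zero_object {H : hyperring} (Z : hmodule H) : Prop :=
  forall A : hmodule H,
    (exists f : hmod_hom Z A, forall f' : hmod_hom Z A, hom_eq f' f) /\
    (exists g : hmod_hom A Z, forall g' : hmod_hom A Z, hom_eq g' g).

Definition morph_class (H : hyperring) : Type :=
  forall (M N : hmodule H), hmod_hom M N -> Prop.

(* Square
       A  --i-->  B
       |j         |j'
       v          v
       A' --i'--> B'                                                          *)
Definition commutes {H : hyperring} {A B A' B' : hmodule H}
  (i : hmod_hom A B) (j : hmod_hom A A') (i' : hmod_hom A' B') (j' : hmod_hom B B') : Prop :=
  hom_eq (hom_comp j' i) (hom_comp i' j).

Definition is_pullback {H : hyperring} {A B A' B' : hmodule H}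
  (i : hmod_hom A B) (j : hmod_hom A A') (i' : hmod_hom A' B') (j' : hmod_hom B B') : Prop :=
  commutes i j i' j' /\
  forall (X : hmodule H) (u : hmod_hom X A') (v : hmod_hom X B),
    hom_eq (hom_comp i' u) (hom_comp j' v) ->
    exists w : hmod_hom X A,
      hom_eq (hom_comp j w) u /\ hom_eq (hom_comp i w) v /\
      forall w' : hmod_hom X A,
        hom_eq (hom_comp j w') u -> hom_eq (hom_comp i w') v -> hom_eq w' w.

Definition is_pushout {H : hyperring} {A B A' B' : hmodule H}
  (i : hmod_hom A B) (j : hmod_hom A A') (i' : hmod_hom A' B') (j' : hmod_hom B B') : Prop :=
  commutes i j i' j' /\
  forall (X : hmodule H) (p : hmod_hom A' X) (q : hmod_hom B X),
    hom_eq (hom_comp p j) (hom_comp q i) ->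
    exists w : hmod_hom B' X,
      hom_eq (hom_comp w i') p /\ hom_eq (hom_comp w j') q /\
      forall w' : hmod_hom B' X,
        hom_eq (hom_comp w' i') p -> hom_eq (hom_comp w' j') q -> hom_eq w' w.

Definition proto_exact (H : hyperring) (Mc Ec : morph_class H) : Prop :=
  (exists Z : hmodule H, is_zero_object Z) /\
  (forall Z : hmodule H, is_zero_object Z ->
     forall A : hmodule H,
       (forall f : hmod_hom Z A, Mc Z A f) /\ (forall g : hmod_hom A Z, Ec A Z g)) /\
  (forall (M N : hmodule H) (f : hmod_hom M N), is_iso f -> Mc M N f /\ Ec M N f) /\
  (forall (A B C : hmodule H) (f : hmod_hom A B) (g : hmod_hom B C),
     (Mc A B f -> Mc B C g -> Mc A C (hom_comp g f)) /\
     (Ec A B f -> Ec B C g -> Ec A C (hom_comp g f))) /\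
  (forall (A B A' B' : hmodule H) (i : hmod_hom A B) (j : hmod_hom A A')
          (i' : hmod_hom A' B') (j' : hmod_hom B B'),
     Mc A B i -> Mc A' B' i' -> Ec A A' j -> Ec B B' j' ->
     commutes i j i' j' ->
     (is_pullback i j i' j' <-> is_pushout i j i' j')) /\
  (forall (A' B B' : hmodule H) (i' : hmod_hom A' B') (j' : hmod_hom B B'),
     Mc A' B' i' -> Ec B B' j' ->
     exists (A : hmodule H) (i : hmod_hom A B) (j : hmod_hom A A'),
       Mc A B i /\ Ec A A' j /\ is_pullback i j i' j' /\ is_pushout i j i' j') /\
  (forall (A B A' : hmodule H) (i : hmod_hom A B) (j : hmod_hom A A'),
     Mc A B i -> Ec A A' j ->
     exists (B' : hmodule H) (i' : hmod_hom A' B') (j' : hmod_hom B B'),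
       Mc A' B' i' /\ Ec B B' j' /\ is_pullback i j i' j' /\ is_pushout i j i' j').

(* Main.v *)
Require Import Defs.
From Stdlib Require Import Classical FunctionalExtensionality ClassicalEpsilon ProofIrrelevance PropExtensionality.

Lemma add0l (G : hypergroup) (a x : G) : hg_add hg_zero a x <-> x = a.
Proof. rewrite hg_addC. apply hg_add0. Qed.

Lemma opp_opp (G : hypergroup) (a : G) : hg_opp (hg_opp a) = a.
Proof. symmetry. apply hg_opp_unique. apply hg_addC. apply hg_addN. Qed.

Lemma opp_zero (G : hypergroup) : hg_opp (@hg_zero G) = hg_zero.
Proof. symmetry. apply hg_opp_unique. apply hg_add0. reflexivity. Qed.

Lemma act_zero (H : hyperring) (M : hmodule H) (r : H) : hm_act r (@hg_zero M) = hg_zero.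
Proof.
  rewrite <- (hm_act0 H M hg_zero) at 1.
  rewrite <- hm_actA. rewrite hr_mulC, hr_mul0. apply hm_act0.
Qed.

Lemma hom_opp {H : hyperring} {M N : hmodule H} (f : hmod_hom M N) (a : M) :
  f (hg_opp a) = hg_opp (f a).
Proof.
  apply hg_opp_unique. rewrite <- (hom_zero _ _ f). apply hom_add. apply hg_addN.
Qed.

Lemma strict_ker {H : hyperring} {M N : hmodule H} (f : hmod_hom M N) :
  strict f -> forall b1 b2, f b1 = f b2 ->
  exists k, f k = hg_zero /\ hg_add b2 k b1.
Proof.
  intros Hs b1 b2 E.
  assert (A : hg_add (f b1) (f (hg_opp b2)) hg_zero).
  { rewrite hom_opp, E. apply hg_addN. }
  apply Hs in A. destruct A as [c [Hc Ec]].
  exists c. split; [symmetry; exact Ec|].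
  apply hg_addC in Hc. apply hg_reversible in Hc. rewrite opp_opp in Hc.
  apply hg_addC. exact Hc.
Qed.
Section Quot.
Context {H : hyperring} (B : hmodule H) (K : B -> Prop).
Hypothesis K0 : K hg_zero.
Hypothesis Kadd : forall a b c, K a -> K b -> hg_add a b c -> K c.
Hypothesis Kopp : forall a, K a -> K (hg_opp a).
Hypothesis Kact : forall r a, K a -> K (hm_act r a).

Definition rel (b c : B) : Prop := exists k, K k /\ hg_add c k b.

Lemma rel_refl b : rel b b.
Proof. exists hg_zero. split; [exact K0|]. apply hg_add0. reflexivity. Qed.

Lemma rel_sym b c : rel b c -> rel c b.
Proof.
  intros [k [Hk Hb]]. exists (hg_opp k). split; [auto|].
  apply hg_addC in Hb. apply hg_reversible in Hb. exact Hb.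
Qed.

Lemma rel_trans b c d : rel b c -> rel c d -> rel b d.
Proof.
  intros [k1 [Hk1 H1]] [k2 [Hk2 H2]].
  assert (E : exists y, hg_add d k2 y /\ hg_add y k1 b) by eauto.
  apply hg_addA in E. destruct E as [e [He Hb]].
  exists e. split; [eauto|exact Hb].
Qed.

Lemma rel0 c : rel c hg_zero <-> K c.
Proof.
  split.
  - intros [k [Hk Hc]]. apply add0l in Hc. subst. exact Hk.
  - intros Hc. exists c. split; [exact Hc|]. apply add0l. reflexivity.
Qed.

Lemma compat_l x x' y c : rel x x' -> hg_add x y c ->
  exists c', hg_add x' y c' /\ rel c c'.
Proof.
  intros [k [Hk Hx]] Hc.
  assert (E : exists y0, hg_add x' k y0 /\ hg_add y0 y c) by eauto.
  apply hg_addA in E. destruct E as [y1 [Hy1 Hc1]].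
  apply hg_addC in Hy1.
  assert (E : exists y0, hg_add y k y0 /\ hg_add x' y0 c) by eauto.
  apply hg_addA in E. destruct E as [c' [Hc' Hcc]].
  exists c'. split; [exact Hc'|]. exists k. split; auto.
Qed.

Lemma compat x x' y y' c : rel x x' -> rel y y' -> hg_add x y c ->
  exists c', hg_add x' y' c' /\ rel c c'.
Proof.
  intros Rx Ry Hc.
  destruct (compat_l _ _ _ _ Rx Hc) as [c1 [H1 R1]].
  apply hg_addC in H1.
  destruct (compat_l _ _ _ _ Ry H1) as [c2 [H2 R2]].
  apply hg_addC in H2. exists c2. split; [exact H2|]. eapply rel_trans; eauto.
Qed.

Lemma rel_act r a b : rel a b -> rel (hm_act r a) (hm_act r b).
Proof.
  intros [k [Hk Ha]]. exists (hm_act r k). split; [auto|].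
  apply hm_actDr. exists a. split; auto.
Qed.

Definition rep (b : B) : B := epsilon (inhabits hg_zero) (fun c => rel c b).

Lemma rep_rel b : rel (rep b) b.
Proof.
  unfold rep. apply (epsilon_spec (inhabits hg_zero) (fun c => rel c b)).
  exists b. apply rel_refl.
Qed.

Lemma rep_eq a b : rel a b -> rep a = rep b.
Proof.
  intros R. unfold rep. f_equal. apply functional_extensionality. intros c.
  apply propositional_extensionality. split; intros R'.
  - eapply rel_trans; eauto.
  - eapply rel_trans; eauto. apply rel_sym; auto.
Qed.

Lemma rep_idem b : rep (rep b) = rep b.
Proof. apply rep_eq. apply rep_rel. Qed.

Definition Q : Type := { b : B | rep b = b }.
Definition qq (b : B) : Q := exist _ (rep b) (rep_idem b).

Lemma Qeq (x y : Q) : rel (proj1_sig x) (proj1_sig y) -> x = y.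
Proof.
  destruct x as [x hx], y as [y hy]. simpl. intros R.
  assert (x = y) by (rewrite <- hx, <- hy; apply rep_eq; exact R).
  subst. f_equal. apply proof_irrelevance.
Qed.

Lemma Qeq_qq (x : Q) a : rel (proj1_sig x) a -> x = qq a.
Proof.
  intros R. apply Qeq. simpl. eapply rel_trans; [exact R|]. apply rel_sym, rep_rel.
Qed.

Lemma qq_eq a b : rel a b -> qq a = qq b.
Proof. intros R. apply Qeq_qq. simpl. eapply rel_trans; [apply rep_rel|exact R]. Qed.

Lemma qq_rel a b : qq a = qq b -> rel a b.
Proof.
  intros E. apply (f_equal (@proj1_sig _ _)) in E. simpl in E.
  eapply rel_trans; [apply rel_sym, rep_rel|]. rewrite E. apply rep_rel.
Qed.

Lemma qq_val (x : Q) : qq (proj1_sig x) = x.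
Proof. symmetry. apply Qeq_qq. apply rel_refl. Qed.

Definition Qadd (x y z : Q) : Prop :=
  exists c, hg_add (proj1_sig x) (proj1_sig y) c /\ rel (proj1_sig z) c.
Definition Qz : Q := qq hg_zero.
Definition Qopp (x : Q) : Q := qq (hg_opp (proj1_sig x)).

Lemma Q_nonempty a b : exists c, Qadd a b c.
Proof.
  destruct (hg_add_nonempty _ (proj1_sig a) (proj1_sig b)) as [c Hc].
  exists (qq c). exists c. split; [exact Hc|]. apply rep_rel.
Qed.

Lemma Q_addC a b c : Qadd a b c <-> Qadd b a c.
Proof. split; intros [d [Hd R]]; exists d; split; auto; apply hg_addC; auto. Qed.

Lemma Q_assoc_fwd x y z w :
  (exists u, Qadd x y u /\ Qadd u z w) -> (exists v, Qadd y z v /\ Qadd x v w).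
Proof.
  intros [u [[c [Hc Ru]] [d [Hd Rw]]]].
  destruct (compat _ _ _ _ _ Ru (rel_refl _) Hd) as [d' [Hd' Rd]].
  assert (E : exists y0, hg_add (proj1_sig x) (proj1_sig y) y0 /\ hg_add y0 (proj1_sig z) d') by eauto.
  apply hg_addA in E. destruct E as [e [He Hxe]].
  exists (qq e). split.
  - exists e. split; [exact He|apply rep_rel].
  - destruct (compat _ _ _ _ _ (rel_refl (proj1_sig x)) (rel_sym _ _ (rep_rel e)) Hxe) as [f [Hf Rf]].
    exists f. split; [exact Hf|]. eapply rel_trans; [exact Rw|]. eapply rel_trans; eauto.
Qed.

Lemma Q_assoc a b c x :
  (exists y, Qadd a b y /\ Qadd y c x) <-> (exists y, Qadd b c y /\ Qadd a y x).
Proof.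
  split; [apply Q_assoc_fwd|].
  intros [v [Hv Hw]]. apply Q_addC in Hv. apply Q_addC in Hw.
  destruct (Q_assoc_fwd c b a x (ex_intro _ v (conj Hv Hw))) as [u [Hu Hu2]].
  exists u. split; apply Q_addC; auto.
Qed.

Lemma Kz : K (proj1_sig Qz).
Proof. simpl. apply rel0. apply rep_rel. Qed.

Lemma Q_add0 a x : Qadd a Qz x <-> x = a.
Proof.
  split.
  - intros [c [Hc R]]. apply Qeq. eapply rel_trans; [exact R|].
    exists (proj1_sig Qz). split; [apply Kz|exact Hc].
  - intros ->. destruct (hg_add_nonempty _ (proj1_sig a) (proj1_sig Qz)) as [c Hc].
    exists c. split; [exact Hc|]. apply rel_sym. exists (proj1_sig Qz). split; [apply Kz|exact Hc].
Qed.

Lemma Q_zero_unique z : (forall a x, Qadd a z x <-> x = a) -> z = Qz.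
Proof.
  intros Hz. apply (Hz Qz z). apply Q_addC. apply Q_add0. reflexivity.
Qed.

Lemma Q_addN a : Qadd a (Qopp a) Qz.
Proof.
  destruct (compat _ _ _ _ _ (rel_refl (proj1_sig a)) (rel_sym _ _ (rep_rel (hg_opp (proj1_sig a))))
     (hg_addN _ (proj1_sig a))) as [c [Hc R]].
  exists c. split; [exact Hc|]. simpl. eapply rel_trans; [apply rep_rel|exact R].
Qed.

Lemma Q_opp_unique a b : Qadd a b Qz -> b = Qopp a.
Proof.
  intros [c [Hc R]]. simpl in R.
  assert (Kc : K c).
  { apply rel0. eapply rel_trans; [apply rel_sym; exact R|apply rep_rel]. }
  apply Qeq_qq. apply hg_reversible in Hc. apply hg_addC in Hc.
  exists c. split; auto.
Qed.

Lemma Q_rev a b c : Qadd b c a -> Qadd a (Qopp b) c.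
Proof.
  intros [d [Hd R]]. apply hg_reversible in Hd.
  destruct (compat _ _ _ _ _ (rel_sym _ _ R) (rel_sym _ _ (rep_rel (hg_opp (proj1_sig b)))) Hd)
    as [f [Hf Rf]].
  exists f. split; [exact Hf|exact Rf].
Qed.

Definition Qhg : hypergroup :=
  HyperGroup Q Qadd Qz Qopp Q_nonempty Q_addC Q_assoc Q_add0 Q_zero_unique Q_addN
    Q_opp_unique Q_rev.

Definition Qact (r : H) (x : Q) : Q := qq (hm_act r (proj1_sig x)).

Lemma Q_act1 (m : Qhg) : Qact hr_one m = m.
Proof. unfold Qact. rewrite hm_act1. apply qq_val. Qed.

Lemma Q_act0 (m : Qhg) : Qact hg_zero m = @hg_zero Qhg.
Proof. unfold Qact. rewrite hm_act0. reflexivity. Qed.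

Lemma Q_actA x y (m : Qhg) : Qact (hr_mul x y) m = Qact x (Qact y m).
Proof.
  unfold Qact. apply qq_eq. simpl. rewrite hm_actA. apply rel_act. apply rel_sym, rep_rel.
Qed.

Lemma Q_actDr x (m1 m2 z : Qhg) :
  @hg_add Qhg (Qact x m1) (Qact x m2) z <-> exists y : Qhg, hg_add m1 m2 y /\ z = Qact x y.
Proof.
  simpl. unfold Qadd, Qact. simpl. split.
  - intros [c [Hc R]].
    destruct (compat _ _ _ _ _ (rep_rel _) (rep_rel _) Hc) as [c' [Hc' R']].
    apply hm_actDr in Hc'. destruct Hc' as [y0 [Hy0 ->]].
    exists (qq y0). split.
    + exists y0. split; [exact Hy0|apply rep_rel].
    + apply Qeq_qq. simpl. eapply rel_trans; [exact R|]. eapply rel_trans; [exact R'|].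
      apply rel_act. apply rel_sym, rep_rel.
  - intros [y [[c [Hc R]] ->]].
    assert (Hxc : hg_add (hm_act x (proj1_sig m1)) (hm_act x (proj1_sig m2)) (hm_act x c)).
    { apply hm_actDr. eauto. }
    destruct (compat _ _ _ _ _ (rel_sym _ _ (rep_rel _)) (rel_sym _ _ (rep_rel _)) Hxc) as [f [Hf Rf]].
    exists f. split; [exact Hf|]. simpl. eapply rel_trans; [apply rep_rel|].
    eapply rel_trans; [|exact Rf]. apply rel_act. exact R.
Qed.

Lemma Q_actDl x y (m z : Qhg) :
  @hg_add Qhg (Qact x m) (Qact y m) z <-> exists r, hg_add x y r /\ z = Qact r m.
Proof.
  simpl. unfold Qadd, Qact. simpl. split.
  - intros [c [Hc R]].
    destruct (compat _ _ _ _ _ (rep_rel _) (rep_rel _) Hc) as [c' [Hc' R']].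
    apply hm_actDl in Hc'. destruct Hc' as [r [Hr ->]].
    exists r. split; [exact Hr|].
    apply Qeq_qq. eapply rel_trans; eauto.
  - intros [r [Hr ->]].
    assert (Hxc : hg_add (hm_act x (proj1_sig m)) (hm_act y (proj1_sig m)) (hm_act r (proj1_sig m))).
    { apply hm_actDl. eauto. }
    destruct (compat _ _ _ _ _ (rel_sym _ _ (rep_rel _)) (rel_sym _ _ (rep_rel _)) Hxc) as [f [Hf Rf]].
    exists f. split; [exact Hf|]. simpl. eapply rel_trans; [apply rep_rel|exact Rf].
Qed.

Definition Qmod : hmodule H :=
  HModule H Qhg Qact Q_act1 Q_act0 Q_actA Q_actDr Q_actDl.

Lemma qhom_act r (m : B) : (qq (hm_act r m) : Qmod) = hm_act r (qq m : Qmod).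
Proof. simpl. unfold Qact. apply qq_eq. simpl. apply rel_act. apply rel_sym, rep_rel. Qed.

Lemma qhom_add a b c : hg_add a b c -> hg_add (qq a : Qmod) (qq b : Qmod) (qq c : Qmod).
Proof.
  intros Hc. simpl. unfold Qadd. simpl.
  destruct (compat _ _ _ _ _ (rel_sym _ _ (rep_rel a)) (rel_sym _ _ (rep_rel b)) Hc) as [f [Hf Rf]].
  exists f. split; [exact Hf|]. eapply rel_trans; [apply rep_rel|exact Rf].
Qed.

Definition Qhom : hmod_hom B Qmod := HModHom H B Qmod qq eq_refl qhom_act qhom_add.

Lemma Qhom_strict : strict Qhom.
Proof.
  intros a b z. split.
  - intros [d [Hd R]]. simpl in Hd.
    destruct (compat _ _ _ _ _ (rep_rel a) (rep_rel b) Hd) as [c [Hc Rc]].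
    exists c. split; [exact Hc|]. apply Qeq_qq. eapply rel_trans; eauto.
  - intros [c [Hc ->]]. apply hom_add. exact Hc.
Qed.

Lemma Qhom_surj : surjective_hom Qhom.
Proof. intros y. exists (proj1_sig y). apply qq_val. Qed.

Lemma Qhom_ker b : Qhom b = hg_zero -> K b.
Proof. intros E. apply rel0. apply qq_rel. exact E. Qed.

Lemma Qhom_K b : K b -> Qhom b = hg_zero.
Proof. intros Kb. apply qq_eq. apply rel0. exact Kb. Qed.

End Quot.
Section Sub.
Context {H : hyperring} (B : hmodule H) (S : B -> Prop).
Hypothesis S0 : S hg_zero.
Hypothesis Sadd : forall a b c, S a -> S b -> hg_add a b c -> S c.
Hypothesis Sopp : forall a, S a -> S (hg_opp a).
Hypothesis Sactc : forall r a, S a -> S (hm_act r a).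

Definition SC : Type := { b : B | S b }.
Lemma sub_eq (x y : SC) : proj1_sig x = proj1_sig y -> x = y.
Proof. destruct x, y; simpl; intros; subst; f_equal; apply proof_irrelevance. Qed.

Definition Sa (x y z : SC) : Prop := hg_add (proj1_sig x) (proj1_sig y) (proj1_sig z).
Definition Sz : SC := exist _ hg_zero S0.
Definition So (x : SC) : SC := exist _ (hg_opp (proj1_sig x)) (Sopp _ (proj2_sig x)).

Lemma S_nonempty a b : exists c, Sa a b c.
Proof.
  destruct (hg_add_nonempty _ (proj1_sig a) (proj1_sig b)) as [c Hc].
  exists (exist _ c (Sadd _ _ _ (proj2_sig a) (proj2_sig b) Hc)). exact Hc.
Qed.
Lemma S_addC a b c : Sa a b c <-> Sa b a c.
Proof. apply hg_addC. Qed.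
Lemma S_assoc a b c x :
  (exists y, Sa a b y /\ Sa y c x) <-> (exists y, Sa b c y /\ Sa a y x).
Proof.
  split.
  - intros [y [H1 H2]].
    assert (E : exists y0, hg_add (proj1_sig a) (proj1_sig b) y0 /\ hg_add y0 (proj1_sig c) (proj1_sig x)) by eauto.
    apply hg_addA in E. destruct E as [e [He He2]].
    exists (exist _ e (Sadd _ _ _ (proj2_sig b) (proj2_sig c) He)). split; assumption.
  - intros [y [H1 H2]].
    assert (E : exists y0, hg_add (proj1_sig b) (proj1_sig c) y0 /\ hg_add (proj1_sig a) y0 (proj1_sig x)) by eauto.
    apply hg_addA in E. destruct E as [e [He He2]].
    exists (exist _ e (Sadd _ _ _ (proj2_sig a) (proj2_sig b) He)). split; assumption.
Qed.
Lemma S_add0 a x : Sa a Sz x <-> x = a.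
Proof.
  unfold Sa. simpl. rewrite hg_add0. split; [apply sub_eq|intros ->; reflexivity].
Qed.
Lemma S_zero_unique z : (forall a x, Sa a z x <-> x = a) -> z = Sz.
Proof. intros Hz. apply (Hz Sz z). apply S_addC. apply S_add0. reflexivity. Qed.
Lemma S_addN a : Sa a (So a) Sz.
Proof. apply hg_addN. Qed.
Lemma S_opp_unique a b : Sa a b Sz -> b = So a.
Proof. intros E. apply sub_eq. apply hg_opp_unique. exact E. Qed.
Lemma S_rev a b c : Sa b c a -> Sa a (So b) c.
Proof. apply hg_reversible. Qed.

Definition Shg : hypergroup :=
  HyperGroup SC Sa Sz So S_nonempty S_addC S_assoc S_add0 S_zero_unique S_addN S_opp_unique S_rev.

Definition Sact (r : H) (x : SC) : SC := exist _ (hm_act r (proj1_sig x)) (Sactc _ _ (proj2_sig x)).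

Lemma S_act1 (m : Shg) : Sact hr_one m = m.
Proof. apply sub_eq. apply hm_act1. Qed.
Lemma S_act0 (m : Shg) : Sact hg_zero m = @hg_zero Shg.
Proof. apply sub_eq. apply hm_act0. Qed.
Lemma S_actA x y (m : Shg) : Sact (hr_mul x y) m = Sact x (Sact y m).
Proof. apply sub_eq. apply hm_actA. Qed.
Lemma S_actDr x (m1 m2 z : Shg) :
  @hg_add Shg (Sact x m1) (Sact x m2) z <-> exists y : Shg, hg_add m1 m2 y /\ z = Sact x y.
Proof.
  simpl. unfold Sa. simpl. rewrite hm_actDr. split.
  - intros [y [Hy E]].
    exists (exist _ y (Sadd _ _ _ (proj2_sig m1) (proj2_sig m2) Hy)). split; [exact Hy|].
    apply sub_eq. exact E.
  - intros [y [Hy ->]]. exists (proj1_sig y). split; auto.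
Qed.
Lemma S_actDl x y (m z : Shg) :
  @hg_add Shg (Sact x m) (Sact y m) z <-> exists r, hg_add x y r /\ z = Sact r m.
Proof.
  simpl. unfold Sa. simpl. rewrite hm_actDl. split.
  - intros [r [Hr E]]. exists r. split; [exact Hr|]. apply sub_eq. exact E.
  - intros [r [Hr ->]]. exists r. split; auto.
Qed.

Definition Smod : hmodule H := HModule H Shg Sact S_act1 S_act0 S_actA S_actDr S_actDl.

Definition Sincl : hmod_hom Smod B :=
  HModHom H Smod B (fun x => proj1_sig x) eq_refl (fun r m => eq_refl) (fun a b c h => h).

Lemma Sincl_mono : strict_mono Sincl.
Proof.
  split.
  - intros a b z. split.
    + intros Hz. exists (exist _ z (Sadd _ _ _ (proj2_sig a) (proj2_sig b) Hz)). split; auto.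
    + intros [c [Hc ->]]. exact Hc.
  - intros x y E. apply sub_eq. exact E.
Qed.
End Sub.

Definition U_hg : hypergroup.
Proof.
  refine (HyperGroup unit (fun _ _ _ => True) tt (fun _ => tt) _ _ _ _ _ _ _ _).
  - intros; exists tt; exact I.
  - tauto.
  - intros; split; intros _; exists tt; tauto.
  - intros [] []; tauto.
  - intros [] _; reflexivity.
  - intros; exact I.
  - intros _ [] _; reflexivity.
  - intros; exact I.
Defined.

Definition U_mod (H : hyperring) : hmodule H.
Proof.
  refine (HModule H U_hg (fun _ _ => tt) _ _ _ _ _).
  - intros []; reflexivity.
  - intros []; reflexivity.
  - reflexivity.
  - intros; simpl; split; [intros _; exists tt; split; [exact I| destruct z; reflexivity]|tauto].
  - intros; simpl; split; [intros _|tauto].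
    destruct (hg_add_nonempty _ x y) as [r Hr]. exists r. split; [exact Hr|destruct z; reflexivity].
Defined.

Definition zero_hom {H : hyperring} (M N : hmodule H) : hmod_hom M N :=
  HModHom H M N (fun _ => hg_zero) eq_refl (fun r m => eq_sym (act_zero H N r))
    (fun _ _ _ _ => proj2 (hg_add0 _ hg_zero hg_zero) eq_refl).

Definition id_hom {H : hyperring} (M : hmodule H) : hmod_hom M M :=
  HModHom H M M (fun x => x) eq_refl (fun r m => eq_refl) (fun _ _ _ h => h).

Lemma U_zero (H : hyperring) : is_zero_object (U_mod H).
Proof.
  intros A. split.
  - exists (zero_hom _ A). intros f' []. exact (hom_zero _ _ f').
  - exists (zero_hom A _). intros g' x. destruct (g' x). reflexivity.
Qed.

Lemma zero_single {H : hyperring} (Z : hmodule H) : is_zero_object Z -> forall x : Z, x = hg_zero.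
Proof.
  intros HZ x. destruct (HZ Z) as [[f Hf] _].
  pose proof (Hf (id_hom Z) x) as E1. pose proof (Hf (zero_hom Z Z) x) as E2.
  simpl in *. congruence.
Qed.

Lemma HH_actDl (H : hyperring) (x y m z : H) :
  hg_add (hr_mul x m) (hr_mul y m) z <-> exists r, hg_add x y r /\ z = hr_mul r m.
Proof.
  rewrite (hr_mulC H x m), (hr_mulC H y m), hr_mulDr.
  split; intros [r [Hr E]]; exists r; split; auto; rewrite E; apply hr_mulC.
Qed.

Definition HH (H : hyperring) : hmodule H :=
  HModule H (hr_hg H) hr_mul (hr_mul1 H) (hr_mul0 H)
    (fun x y m => eq_sym (hr_mulA H x y m)) (hr_mulDr H) (HH_actDl H).

Definition ev {H : hyperring} (M : hmodule H) (m : M) : hmod_hom (HH H) M.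
Proof.
  refine (HModHom H (HH H) M (fun r => hm_act r m) (hm_act0 H M m) (fun r s => hm_actA H M r s m) _).
  intros a b c Hc. apply hm_actDl. eauto.
Defined.
Lemma lift_mono {H : hyperring} {X A B : hmodule H} (i : hmod_hom A B) (v : hmod_hom X B) :
  strict_mono i -> (forall x, exists a, i a = v x) ->
  exists w : hmod_hom X A, forall x, i (w x) = v x.
Proof.
  intros [Hs Hi] Hv.
  set (w := fun x => epsilon (inhabits (@hg_zero A)) (fun a => i a = v x)).
  assert (Hw : forall x, i (w x) = v x).
  { intros x. unfold w. apply (epsilon_spec (inhabits hg_zero) (fun a => i a = v x)). apply Hv. }
  assert (W0 : w hg_zero = hg_zero).
  { apply Hi. rewrite Hw, !hom_zero. reflexivity. }
  assert (WA : forall r x, w (hm_act r x) = hm_act r (w x)).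
  { intros r x. apply Hi. rewrite Hw, !hom_act, Hw. reflexivity. }
  assert (WD : forall a b c, hg_add a b c -> hg_add (w a) (w b) (w c)).
  { intros a b c Hc. apply (hom_add _ _ v) in Hc. rewrite <- !Hw in Hc.
    apply Hs in Hc. destruct Hc as [d [Hd E]]. apply Hi in E. rewrite E. exact Hd. }
  exists (HModHom H X A w W0 WA WD). exact Hw.
Qed.

Lemma factor_epi {H : hyperring} {A A' X : hmodule H} (j : hmod_hom A A') (g : hmod_hom A X) :
  strict_epi j -> (forall a, j a = hg_zero -> g a = hg_zero) ->
  exists h : hmod_hom A' X, forall a, h (j a) = g a.
Proof.
  intros [Hs Hj] Hg.
  set (sec := fun y => epsilon (inhabits (@hg_zero A)) (fun a => j a = y)).
  assert (Hsec : forall y, j (sec y) = y).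
  { intros y. unfold sec. apply (epsilon_spec (inhabits hg_zero) (fun a => j a = y)). apply Hj. }
  set (h := fun y => g (sec y)).
  assert (Hh : forall a, h (j a) = g a).
  { intros a. unfold h. destruct (strict_ker j Hs _ _ (Hsec (j a))) as [k [Hk Hadd]].
    apply (hom_add _ _ g) in Hadd. rewrite (Hg k Hk) in Hadd. apply hg_add0 in Hadd. exact Hadd. }
  assert (H0 : h hg_zero = hg_zero).
  { rewrite <- (hom_zero _ _ j), Hh. apply hom_zero. }
  assert (HA : forall r y, h (hm_act r y) = hm_act r (h y)).
  { intros r y. rewrite <- (Hsec y), <- hom_act, !Hh. apply hom_act. }
  assert (HD : forall a b c, hg_add a b c -> hg_add (h a) (h b) (h c)).
  { intros a b c Hc. rewrite <- (Hsec a), <- (Hsec b) in Hc. apply Hs in Hc.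
    destruct Hc as [d [Hd ->]]. rewrite !Hh. apply hom_add. exact Hd. }
  exists (HModHom H A' X h H0 HA HD). exact Hh.
Qed.

Definition Ccond {H : hyperring} {A B A' B' : hmodule H}
  (i : hmod_hom A B) (i' : hmod_hom A' B') (j' : hmod_hom B B') : Prop :=
  forall b a', j' b = i' a' -> exists a, i a = b.

Lemma C_pullback {H : hyperring} {A B A' B' : hmodule H}
  (i : hmod_hom A B) (j : hmod_hom A A') (i' : hmod_hom A' B') (j' : hmod_hom B B') :
  strict_mono i -> strict_mono i' -> commutes i j i' j' -> Ccond i i' j' ->
  is_pullback i j i' j'.
Proof.
  intros Mi Mi' Hc C. split; [exact Hc|].
  intros X u v Huv. unfold hom_eq in Huv. simpl in Huv.
  destruct (lift_mono i v Mi) as [w Hw].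
  { intros x. apply (C _ (u x)). symmetry. apply Huv. }
  exists w. split; [|split].
  - intros x. simpl. apply (proj2 Mi'). rewrite Huv, <- Hw. symmetry. apply Hc.
  - intros x. apply Hw.
  - intros w' _ H2 x. apply (proj2 Mi). rewrite Hw. apply H2.
Qed.

Lemma C_pushout {H : hyperring} {A B A' B' : hmodule H}
  (i : hmod_hom A B) (j : hmod_hom A A') (i' : hmod_hom A' B') (j' : hmod_hom B B') :
  strict_mono i' -> strict_epi j -> strict_epi j' -> commutes i j i' j' -> Ccond i i' j' ->
  is_pushout i j i' j'.
Proof.
  intros Mi' Ej Ej' Hc C. split; [exact Hc|].
  intros X p q Hpq. unfold hom_eq in Hpq. simpl in Hpq.
  destruct (factor_epi j' q Ej') as [w Hw].
  { intros k Hk. rewrite <- (hom_zero _ _ i') in Hk. destruct (C _ _ Hk) as [a Ha]. subst k.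
    assert (Ja : j a = hg_zero).
    { apply (proj2 Mi'). rewrite <- Hk. symmetry. apply Hc. }
    rewrite <- Hpq, Ja. apply hom_zero. }
  exists w. split; [|split].
  - intros x. simpl. destruct (proj2 Ej x) as [a <-].
    pose proof (Hc a) as E. simpl in E. rewrite <- E, Hw. symmetry. apply Hpq.
  - intros x. apply Hw.
  - intros w' _ H2 y. destruct (proj2 Ej' y) as [b <-]. rewrite Hw. apply H2.
Qed.

Lemma pullback_C {H : hyperring} {A B A' B' : hmodule H}
  (i : hmod_hom A B) (j : hmod_hom A A') (i' : hmod_hom A' B') (j' : hmod_hom B B') :
  is_pullback i j i' j' -> Ccond i i' j'.
Proof.
  intros [Hc U] b a' E.
  destruct (U (HH H) (ev A' a') (ev B b)) as [w [_ [H2 _]]].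
  { intros r. simpl. rewrite !hom_act, E. reflexivity. }
  exists (w hr_one). pose proof (H2 hr_one) as E2. simpl in E2. rewrite E2. apply hm_act1.
Qed.

Section PushC.
Context {H : hyperring} {A B : hmodule H} (i : hmod_hom A B) (Mi : strict_mono i).
Definition Kim (b : B) : Prop := exists a, i a = b.
Lemma Kim0 : Kim hg_zero. Proof. exists hg_zero. apply hom_zero. Qed.
Lemma Kim_add a b c : Kim a -> Kim b -> hg_add a b c -> Kim c.
Proof.
  intros [x <-] [y <-] Hc. apply (proj1 Mi) in Hc. destruct Hc as [d [_ ->]]. exists d; auto.
Qed.
Lemma Kim_opp a : Kim a -> Kim (hg_opp a).
Proof. intros [x <-]. exists (hg_opp x). apply hom_opp. Qed.
Lemma Kim_act r a : Kim a -> Kim (hm_act r a).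
Proof. intros [x <-]. exists (hm_act r x). apply hom_act. Qed.
End PushC.

Lemma pushout_C {H : hyperring} {A B A' B' : hmodule H}
  (i : hmod_hom A B) (j : hmod_hom A A') (i' : hmod_hom A' B') (j' : hmod_hom B B') :
  strict_mono i -> is_pushout i j i' j' -> Ccond i i' j'.
Proof.
  intros Mi [Hc U] b a' E.
  pose (K := Kim i).
  pose (q := Qhom B K (Kim0 i) (Kim_add i Mi) (Kim_opp i) (Kim_act i)).
  destruct (U _ (zero_hom A' _) q) as [w [H1 [H2 _]]].
  { intros a. simpl. symmetry. apply (Qhom_K B K (Kim0 i) (Kim_add i Mi) (Kim_opp i) (Kim_act i)). exists a; reflexivity. }
  apply (Qhom_ker B K (Kim0 i) (Kim_add i Mi) (Kim_opp i) (Kim_act i)).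
  fold q. rewrite <- (H2 b). simpl. rewrite E. apply (H1 a').
Qed.
Section Five.
Context {H : hyperring} {A B A' : hmodule H} (i : hmod_hom A B) (j : hmod_hom A A')
  (Mi : strict_mono i) (Ej : strict_epi j).
Definition K5 (b : B) : Prop := exists a, j a = hg_zero /\ i a = b.
Lemma K50 : K5 hg_zero. Proof. exists hg_zero. split; apply hom_zero. Qed.
Lemma K5_add a b c : K5 a -> K5 b -> hg_add a b c -> K5 c.
Proof.
  intros [x [Jx <-]] [y [Jy <-]] Hc. apply (proj1 Mi) in Hc. destruct Hc as [d [Hd ->]].
  exists d. split; [|reflexivity]. apply (hom_add _ _ j) in Hd. rewrite Jx, Jy in Hd.
  apply hg_add0 in Hd. exact Hd.
Qed.
Lemma K5_opp a : K5 a -> K5 (hg_opp a).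
Proof. intros [x [Jx <-]]. exists (hg_opp x). rewrite !hom_opp, Jx. split; [apply opp_zero|reflexivity]. Qed.
Lemma K5_act r a : K5 a -> K5 (hm_act r a).
Proof. intros [x [Jx <-]]. exists (hm_act r x). rewrite !hom_act, Jx. split; [apply act_zero|reflexivity]. Qed.

Lemma five : exists (B' : hmodule H) (i' : hmod_hom A' B') (j' : hmod_hom B B'),
  strict_mono i' /\ strict_epi j' /\ commutes i j i' j' /\ Ccond i i' j'.
Proof.
  pose (q := Qhom B K5 K50 K5_add K5_opp K5_act).
  pose proof (Qhom_strict B K5 K50 K5_add K5_opp K5_act) as Sq. fold q in Sq.
  pose proof (Qhom_surj B K5 K50 K5_add K5_opp K5_act) as Uq. fold q in Uq.
  assert (Rq : forall a b, q a = q b -> rel B K5 a b) by (intros a b; apply qq_rel).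
  assert (Kq : forall b, K5 b -> q b = hg_zero) by (intros b; apply Qhom_K).
  destruct (factor_epi j (hom_comp q i) Ej) as [i' Hi'].
  { intros a Ja. simpl. apply Kq. exists a. auto. }
  simpl in Hi'.
  exists (Qmod B K5 K50 K5_add K5_opp K5_act), i', q. split; [split|split; [split; assumption|split]].
  - intros x y z. split.
    + destruct (proj2 Ej x) as [a <-]. destruct (proj2 Ej y) as [b <-]. rewrite !Hi'.
      intros Hz. apply Sq in Hz. destruct Hz as [c [Hc ->]]. apply (proj1 Mi) in Hc.
      destruct Hc as [d [Hd ->]]. exists (j d). split; [apply hom_add; exact Hd|]. rewrite Hi'. reflexivity.
    + intros [c [Hc ->]]. apply hom_add. exact Hc.
  - intros x y E. destruct (proj2 Ej x) as [a <-]. destruct (proj2 Ej y) as [b <-].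
    rewrite !Hi' in E. apply Rq in E. destruct E as [k [[c [Jc <-]] Hk]].
    apply (proj1 Mi) in Hk. destruct Hk as [d [Hd Ed]]. apply (proj2 Mi) in Ed. subst d.
    apply (hom_add _ _ j) in Hd. rewrite Jc in Hd. apply hg_add0 in Hd. exact Hd.
  - intros a. simpl. symmetry. apply Hi'.
  - intros b a' E. destruct (proj2 Ej a') as [a <-]. rewrite Hi' in E. apply Rq in E.
    destruct E as [k [[c [_ <-]] Hk]]. apply (proj1 Mi) in Hk. destruct Hk as [d [_ Ed]].
    exists d. auto.
Qed.
End Five.

Section Four.
Context {H : hyperring} {A' B B' : hmodule H} (i' : hmod_hom A' B') (j' : hmod_hom B B')
  (Mi' : strict_mono i') (Ej' : strict_epi j').
Definition S4 (b : B) : Prop := exists a', j' b = i' a'.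
Lemma S40 : S4 hg_zero. Proof. exists hg_zero. rewrite !hom_zero. reflexivity. Qed.
Lemma S4_add a b c : S4 a -> S4 b -> hg_add a b c -> S4 c.
Proof.
  intros [x Ex] [y Ey] Hc. apply (hom_add _ _ j') in Hc. rewrite Ex, Ey in Hc.
  apply (proj1 Mi') in Hc. destruct Hc as [d [_ Ed]]. exists d. exact Ed.
Qed.
Lemma S4_opp a : S4 a -> S4 (hg_opp a).
Proof. intros [x Ex]. exists (hg_opp x). rewrite !hom_opp, Ex. reflexivity. Qed.
Lemma S4_act r a : S4 a -> S4 (hm_act r a).
Proof. intros [x Ex]. exists (hm_act r x). rewrite !hom_act, Ex. reflexivity. Qed.

Lemma four : exists (A : hmodule H) (i : hmod_hom A B) (j : hmod_hom A A'),
  strict_mono i /\ strict_epi j /\ commutes i j i' j' /\ Ccond i i' j'.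
Proof.
  pose (M := Smod B S4 S40 S4_add S4_opp S4_act).
  pose (inc := Sincl B S4 S40 S4_add S4_opp S4_act).
  assert (Minc : strict_mono inc) by apply Sincl_mono.
  destruct (lift_mono i' (hom_comp j' inc) Mi') as [jj Hjj].
  { intros x. destruct (proj2_sig x) as [a' E]. exists a'. symmetry. exact E. }
  simpl in Hjj.
  exists M, inc, jj. split; [exact Minc|split; [split|split]].
  - intros x y z. split.
    + intros Hz. apply (hom_add _ _ i') in Hz. rewrite !Hjj in Hz.
      apply (proj1 Ej') in Hz. destruct Hz as [c [Hc Ec]].
      assert (Sc : S4 c) by (exists z; symmetry; exact Ec).
      exists (exist _ c Sc). split; [exact Hc|]. apply (proj2 Mi'). rewrite Hjj. exact Ec.
    + intros [c [Hc ->]]. apply hom_add. exact Hc.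
  - intros a'. destruct (proj2 Ej' (i' a')) as [b Eb].
    assert (Sb : S4 b) by (exists a'; exact Eb).
    exists (exist _ b Sb). apply (proj2 Mi'). rewrite Hjj. exact Eb.
  - intros x. simpl. symmetry. apply Hjj.
  - intros b a' E. exists (exist _ b (ex_intro _ a' E)). reflexivity.
Qed.
End Four.

Lemma strict_comp {H : hyperring} {A B C : hmodule H} (f : hmod_hom A B) (g : hmod_hom B C) :
  strict f -> strict g -> strict (hom_comp g f).
Proof.
  intros Sf Sg a b z. simpl. split.
  - intros Hz. apply Sg in Hz. destruct Hz as [c [Hc ->]]. apply Sf in Hc.
    destruct Hc as [d [Hd ->]]. eauto.
  - intros [c [Hc ->]]. apply hom_add, hom_add, Hc.
Qed.

Theorem theoremD (H : hyperring) :
  proto_exact H (fun M N f => strict_mono f) (fun M N f => strict_epi f).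
Proof.
  split; [exists (U_mod H); apply U_zero|].
  split; [|split; [|split; [|split; [|split]]]].
  - intros Z HZ A. pose proof (zero_single Z HZ) as Zs. split.
    + intros f. split.
      * intros a b z. rewrite (Zs a), (Zs b), hom_zero. split.
        -- intros Hz. apply hg_add0 in Hz. subst z. exists hg_zero. split.
           ++ apply hg_add0. reflexivity.
           ++ symmetry. apply hom_zero.
        -- intros [c [_ ->]]. rewrite (Zs c), hom_zero. apply hg_add0. reflexivity.
      * intros x y _. rewrite (Zs x), (Zs y). reflexivity.
    + intros g. split.
      * intros a b z. split.
        -- intros _. destruct (hg_add_nonempty _ a b) as [c Hc]. exists c. split; [exact Hc|].
           rewrite (Zs z), (Zs (g c)). reflexivity.
        -- intros [c [Hc ->]]. apply hom_add. exact Hc.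
      * intros y. exists hg_zero. rewrite hom_zero. symmetry. apply Zs.
  - intros M N f [g [Hgf Hfg]].
    assert (Sf : strict f).
    { intros a b z. split.
      - intros Hz. apply (hom_add _ _ g) in Hz. rewrite !Hgf in Hz. exists (g z). split; auto.
      - intros [c [Hc ->]]. apply hom_add. exact Hc. }
    split; split; auto.
    + intros x y E. rewrite <- (Hgf x), <- (Hgf y), E. reflexivity.
    + intros y. exists (g y). apply Hfg.
  - intros A B C f g. split.
    + intros [Sf If] [Sg Ig]. split; [apply strict_comp; auto|].
      intros x y E. apply If, Ig. exact E.
    + intros [Sf Uf] [Sg Ug]. split; [apply strict_comp; auto|].
      intros z. destruct (Ug z) as [y <-]. destruct (Uf y) as [x <-]. exists x. reflexivity.
  - intros A B A' B' i j i' j' Mi Mi' Ej Ej' Hc. split.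
    + intros P. apply C_pushout; auto. apply (pullback_C i j i' j' P).
    + intros P. apply C_pullback; auto. apply (pushout_C i j i' j' Mi P).
  - intros A' B B' i' j' Mi' Ej'.
    destruct (four i' j' Mi' Ej') as [A [i [j [Mi [Ej [Hc C]]]]]].
    exists A, i, j. split; [exact Mi|split; [exact Ej|split]].
    + apply C_pullback; auto.
    + apply C_pushout; auto.
  - intros A B A' i j Mi Ej.
    destruct (five i j Mi Ej) as [B' [i' [j' [Mi' [Ej' [Hc C]]]]]].
    exists B', i', j'. split; [exact Mi'|split; [exact Ej'|split]].
    + apply C_pullback; auto.
    + apply C_pushout; auto.
Qed.
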